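(* Let $\xi\in W^{1,1}(0,\infty)$ be nonnegative with $\dot\xi(t)\le-\xi(0)\xi(t)$ for a.e. $t>0$. Let $x\in W^{1,1}_{\rm loc}(0,\infty)$ and $y\in L^1_{\rm loc}(0,\infty)$ be nonnegative functions, let $a>0$, $C>0$, $\delta\in(0,1)$ be constants, and set $\mu=\min\{a,\xi(0)(1-\delta)\}$. Assume that for a.e. $t>0$ $$\dot x(t)+a\,x(t)+y(t)\le C+\delta\int_0^t\xi(t-\tau)\,y(\tau)\,d\tau.$$ Then $x(t)\le\max\{x(0),C/\mu\}$ for all $t>0$. *)

(* Defs.v *)
From HB Require Import structures.
From mathcomp Require Import all_boot all_order all_algebra.
From mathcomp Require Import all_classical all_reals all_analysis.
Set Implicit Arguments. Unset Strict Implicit. Unset Printing Implicit Defensive.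
Import Order.TTheory GRing.Theory Num.Theory.
Import numFieldNormedType.Exports.
Local Open Scope classical_set_scope.
Local Open Scope ring_scope.

Notation leb := (@lebesgue_measure _).

Definition L1loc {R : realType} (f : R -> R) : Prop :=
  forall T : R, 0 < T -> leb.-integrable `[0, T] (EFin \o f).

Definition L1 {R : realType} (f : R -> R) : Prop :=
  leb.-integrable `[0, +oo[ (EFin \o f).

(* (x, dx) : x in W^{1,1}_loc with weak derivative dx, i.e. dx in L^1_loc
   and x is the (absolutely continuous) primitive x t = x 0 + int_0^t dx. *)
Definition W11loc {R : realType} (x dx : R -> R) : Prop :=
  L1loc dx /\
  forall t : R, 0 <= t -> x t = x 0 + Rintegral leb `[0, t] dx.

Definition W11 {R : realType} (x dx : R -> R) : Prop :=
  L1 x /\ L1 dx /\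
  forall t : R, 0 <= t -> x t = x 0 + Rintegral leb `[0, t] dx.

Definition kconv0 {R : realType} (xi y : R -> R) (t : R) : R :=
  Rintegral leb `[0, t] (fun tau => xi (t - tau) * y tau).

(* Main.v *)
Require Import Defs.
From HB Require Import structures.
From mathcomp Require Import all_boot all_order all_algebra.
From mathcomp Require Import all_classical all_reals all_analysis.
From mathcomp Require Import ring lra measurable_realfun.
Import Order.TTheory GRing.Theory Num.Theory.
Import numFieldNormedType.Exports.
Local Open Scope classical_set_scope.
Local Open Scope ring_scope.

Set Implicit Arguments. Unset Strict Implicit. Unset Printing Implicit Defensive.

Section aux.
Context {R : realType}.

Lemma expN_lb (h : R) : 1 - h <= expR (- h).
Proof. by have := expR_ge1Dx (- h). Qed.

Lemma expN_ub (h : R) : 0 <= h -> expR (- h) <= 1 - h + h * h.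
Proof.
move=> h0.
have e1 := expR_ge1Dx h.
have eM : expR h * expR (- h) = 1 by rewrite expRxMexpNx_1.
have en := expN_lb h.
have ep := expR_gt0 (- h).
(* e^{-h}(1+h) <= 1, so e^{-h} <= 1 - h e^{-h} <= 1 - h(1-h) *)
have : expR (- h) * (1 + h) <= 1.
  by rewrite -[leRHS]eM [leRHS]mulrC; apply: ler_wpM2l; [exact: ltW|exact: e1].
nra.
Qed.

Lemma PL (f g : R -> R) (c s t : R) : s <= t ->
  (forall u v, s <= u -> u <= v -> v <= t ->
     f v - f u <= (v - u) * (c * (v - u) + (g v - g u))) ->
  f t <= f s.
Proof.
move=> st H.
have key : forall n : nat, (0 < n)%N ->
    f t - f s <= (t - s) / n%:R * (c * (t - s) + (g t - g s)).
  move=> n n0.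
  set h := (t - s) / n%:R.
  have h0 : 0 <= h by rewrite /h divr_ge0 ?subr_ge0.
  have nh : n%:R * h = t - s.
    by rewrite /h mulrC -mulrA mulVf ?mulr1 // pnatr_eq0 -lt0n.
  have ind : forall m : nat, (m <= n)%N ->
      f (s + m%:R * h) - f s <= h * (c * (m%:R * h) + (g (s + m%:R * h) - g s)).
    elim=> [|m IH] mn.
      by rewrite mul0r addr0 !subrr mulr0 add0r mulr0.
    have mn' : (m <= n)%N by apply: ltnW.
    have := IH mn'.
    have Hm := H (s + m%:R * h) (s + m.+1%:R * h).
    have m0 : 0 <= m%:R * h by rewrite mulr_ge0.
    have m1 : m.+1%:R * h <= n%:R * h by rewrite ler_wpM2r // ler_nat.
    have e : s + m.+1%:R * h - (s + m%:R * h) = h.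
      by rewrite -natr1 mulrDl mul1r; ring.
    rewrite e in Hm.
    have Hm' := Hm ltac:(lra) ltac:(rewrite -natr1 mulrDl mul1r; lra) ltac:(lra).
    rewrite -natr1 mulrDl mul1r in Hm' *.
    move=> IH'. nra.
  have := ind n (leqnn n); rewrite nh.
  have -> : s + (t - s) = t by ring.
  by rewrite -/h.
set K := c * (t - s) + (g t - g s).
have [K0|K0] := leP K 0.
  have := key 1%N erefl; rewrite divr1 => H1.
  have tK : (t - s) * K <= 0 by rewrite mulr_ge0_le0 ?subr_ge0.
  rewrite -/K in H1; lra.
have [//|neg] := leP (f t) (f s).
pose d := f t - f s.
have d0 : 0 < d by rewrite /d; lra.
pose M := (t - s) * K / d.
have M0 : 0 <= M by rewrite /M divr_ge0 ?mulr_ge0 ?subr_ge0 // ltW.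
have Mn := archi_boundP M0.
pose n := Num.bound M.
have n0 : (0 < n)%N by rewrite -(ltr_nat R); apply: le_lt_trans Mn.
have nR : 0 < n%:R :> R by rewrite ltr0n.
have k1 := key n n0; rewrite -/K in k1.
have lt1 : (t - s) * K < d * n%:R.
  by rewrite -ltr_pdivrMl // mulrC.
have lt2 : (t - s) * K / n%:R < d.
  by rewrite ltr_pdivrMr.
have : (t - s) / n%:R * K = (t - s) * K / n%:R by rewrite mulrAC.
rewrite /d in lt2; lra.
Qed.

End aux.
Section ih.
Context {R : realType}.
Local Notation mu := (@lebesgue_measure R).

Lemma bnd_ptw (f : R -> R) (A : set R) B :
  (forall x, A x -> `|f x| <= B) -> [bounded f x | x in A].
Proof.
move=> H; rewrite /bounded_near; near=> M => t At /=.
apply: le_trans (H t At) _; near: M; exact: nbhs_pinfty_ge (num_real B).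
Unshelve. all: end_near. Qed.

Lemma int_cst_oc (c u v : R) : mu.-integrable `]u, v] (EFin \o cst c).
Proof.
apply: measurable_bounded_integrable => //.
- have /= -> := @lebesgue_measure_itv R `]u, v].
  by case: ifPn => // _; rewrite -EFinB ltry.
- exact: bounded_cst.
Qed.

Lemma Rint_cst_oc (c u v : R) : u <= v -> \int[mu]_(x in `]u, v]) c = c * (v - u).
Proof.
move=> uv; rewrite Rintegral_cst //.
have /= -> := @lebesgue_measure_itv R `]u, v].
case: ifPn => [_|]; first by rewrite -EFinB.
rewrite lte_fin -leNgt => vu.
have -> : v = u by apply/le_anti; rewrite vu uv.
by rewrite subrr mulr0.
Qed.

Lemma int_sub (f : R -> R) T u v : mu.-integrable `[0, T] (EFin \o f) ->
  0 <= u -> v <= T -> mu.-integrable `]u, v] (EFin \o f).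
Proof.
move=> If u0 vT; apply: integrableS If => //.
by apply: subset_itv; rewrite bnd_simp.
Qed.

Lemma int_sub_cc (f : R -> R) T v : mu.-integrable `[0, T] (EFin \o f) ->
  v <= T -> mu.-integrable `[0, v] (EFin \o f).
Proof.
move=> If vT; apply: integrableS If => //.
by apply: subset_itv; rewrite bnd_simp.
Qed.

Lemma Rint_split (f : R -> R) T u v : mu.-integrable `[0, T] (EFin \o f) ->
  0 <= u -> u <= v -> v <= T ->
  \int[mu]_(x in `[0, v]) f x - \int[mu]_(x in `[0, u]) f x =
  \int[mu]_(x in `]u, v]) f x.
Proof.
move=> If u0 uv vT.
rewrite Rintegral_itvB //.
exact: int_sub_cc If vT.
Qed.

Lemma ae_le_Rint (D N : set (measurableTypeR R)) (f g : R -> R) : measurable D -> measurable N ->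
  mu N = 0 -> mu.-integrable D (EFin \o f) -> mu.-integrable D (EFin \o g) ->
  (forall x, D x -> ~ N x -> f x <= g x) ->
  \int[mu]_(x in D) f x <= \int[mu]_(x in D) g x.
Proof.
move=> mD mN N0 If Ig H.
rewrite /Rintegral (negligible_integral mN mD If N0).
rewrite (negligible_integral mN mD Ig N0).
have mDN : measurable (D `\` N) by exact: measurableD.
have := @le_Rintegral _ _ R mu (D `\` N) f g mDN.
rewrite /Rintegral; apply.
- exact: integrableS If.
- exact: integrableS Ig.
- by move=> x [Dx Nx]; apply: H.
Qed.

End ih.

Section prim.
Context {R : realType}.
Local Notation mu := (@lebesgue_measure R).

Lemma prim_inc (F f : R -> R) T u v : mu.-integrable `[0, T] (EFin \o f) ->
  (forall t, 0 <= t -> F t = F 0 + \int[mu]_(x in `[0, t]) f x) ->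
  0 <= u -> u <= v -> v <= T ->
  F v - F u = \int[mu]_(x in `]u, v]) f x.
Proof.
move=> If HF u0 uv vT.
rewrite (HF v) ?(le_trans u0 uv) // (HF u) //.
rewrite -(Rint_split If u0 uv vT); ring.
Qed.

Lemma Gmono (f : R -> R) T u v : mu.-integrable `[0, T] (EFin \o f) ->
  0 <= u -> u <= v -> v <= T ->
  0 <= \int[mu]_(x in `[0, v]) `|f x| - \int[mu]_(x in `[0, u]) `|f x|.
Proof.
move=> If u0 uv vT.
rewrite (Rint_split (integrable_norm If) u0 uv vT).
apply: Rintegral_ge0 => x _ /=; exact: normr_ge0.
Qed.

Lemma prim_var (F f : R -> R) T u r v : mu.-integrable `[0, T] (EFin \o f) ->
  (forall t, 0 <= t -> F t = F 0 + \int[mu]_(x in `[0, t]) f x) ->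
  0 <= u -> u <= r -> r <= v -> v <= T ->
  `|F r - F u| <= \int[mu]_(x in `[0, v]) `|f x| - \int[mu]_(x in `[0, u]) `|f x|.
Proof.
move=> If HF u0 ur rv vT.
have rT := le_trans rv vT.
rewrite (prim_inc If HF u0 ur rT).
apply: le_trans (le_normr_Rintegral _ _) _ => //.
  exact: int_sub If u0 rT.
rewrite -(Rint_split (integrable_norm If) u0 ur rT).
have := Gmono If (le_trans u0 ur) rv vT.
lra.
Qed.


Lemma xi_step (k eT xu xv ev eu A d : R) :
  0 < k -> 0 <= d -> 0 <= xu -> 0 <= A -> 0 < ev -> ev <= eT ->
  ev * (1 - k * d) <= eu ->
  xv - xu <= - k * d * (xu - A) ->
  ev * xv - eu * xu <= d * (0 * d + (k * eT * A)).
Proof.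
move=> k0 d0 xu0 A0 ev0 evT eu1 H.
have h1 : ev * xv <= ev * (xu - k * d * (xu - A)).
  by apply: ler_wpM2l; [exact: ltW| lra].
have h2 : ev * (1 - k * d) * xu <= eu * xu by apply: ler_wpM2r.
have h3 : ev * (k * d * A) <= eT * (k * d * A).
  by apply: ler_wpM2r => //; rewrite !mulr_ge0 // ltW.
have -> : d * (0 * d + k * eT * A) = eT * (k * d * A) by ring.
have e1 : ev * (xu - k * d * (xu - A)) = ev * (1 - k * d) * xu + ev * (k * d * A) by ring.
lra.
Qed.

Lemma xi_bound (xi dxi : R -> R) (N : set (measurableTypeR R)) (T : R) :
  mu.-integrable `[0, T] (EFin \o dxi) ->
  (forall t, 0 <= t -> xi t = xi 0 + \int[mu]_(x in `[0, t]) dxi x) ->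
  (forall t, 0 <= t -> 0 <= xi t) ->
  measurable N -> mu N = 0 ->
  (forall t, 0 < t -> ~ N t -> dxi t <= - (xi 0 * xi t)) ->
  0 < xi 0 -> 0 <= T ->
  xi T <= xi 0 * expR (- (xi 0 * T)).
Proof.
move=> If Hxi xi0 mN N0 Hd k0 T0.
set k := xi 0 in k0 Hd *.
pose G u := \int[mu]_(x in `[0, u]) `|dxi x|.
have := @PL R (fun u => expR (k * u) * xi u) (fun u => k * expR (k * T) * G u) 0 0 T T0.
have step : forall u v, 0 <= u -> u <= v -> v <= T ->
    expR (k * v) * xi v - expR (k * u) * xi u <=
    (v - u) * (0 * (v - u) + (k * expR (k * T) * G v - k * expR (k * T) * G u)).
  move=> u v u0 uv vT.
  have u0' : 0 <= v := le_trans u0 uv.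
  have Hv := prim_inc If Hxi u0 uv vT.
  have lb : forall r, u < r -> r <= v -> xi u - (G v - G u) <= xi r.
    move=> r ur rv.
    have := prim_var If Hxi u0 (ltW ur) rv vT.
    rewrite -/(G v) -/(G u) => /ler_normlP [h _]; lra.
  have Hint : \int[mu]_(x in `]u, v]) dxi x <=
      \int[mu]_(x in `]u, v]) (- k * (xi u - (G v - G u))).
    apply: (ae_le_Rint _ mN N0).
    - exact: measurable_itv.
    - exact: int_sub If u0 vT.
    - exact: int_cst_oc.
    - move=> r /= ruv Nr.
      rewrite in_itv /= in ruv; case/andP: ruv => ur rv.
      have r0 : 0 < r by apply: le_lt_trans ur.
      have := Hd r r0 Nr; have := lb r ur rv; nra.
  rewrite Rint_cst_oc // in Hint.
  rewrite -mulrBr.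
  apply: (xi_step (eu := expR (k * u)) (xv := xi v)).
  - exact: k0.
  - by rewrite subr_ge0.
  - exact: xi0.
  - exact: (Gmono If u0 uv vT).
  - exact: expR_gt0.
  - by rewrite ler_expR ler_wpM2l // ltW.
  - have -> : expR (k * u) = expR (k * v) * expR (- (k * (v - u))).
      by rewrite -expRD; congr expR; ring.
    apply: ler_wpM2l; first exact: expR_ge0.
    exact: expN_lb.
  - have e : - k * (v - u) * (xi u - (G v - G u)) = - k * (xi u - (G v - G u)) * (v - u) by ring.
    rewrite e Hv; exact: Hint.
move=> /(_ step).
rewrite mulr0 expR0 mul1r => H.
have e1 : expR (k * T) * expR (- (k * T)) = 1 by rewrite expRxMexpNx_1.
have := ler_wpM2r (expR_ge0 (- (k * T))) H.
rewrite mulrAC e1 mul1r.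
done.
Qed.


Lemma to_leb (D : set R) (f : R -> R) :
  measurable_fun D f -> measurable_fun (D : set (measurableTypeR R)) f.
Proof. move=> H. exact: H. Qed.
Lemma of_leb (D : set R) (f : R -> R) :
  measurable_fun (D : set (measurableTypeR R)) f -> measurable_fun D f.
Proof. move=> H. exact: H. Qed.

Lemma Ybound (xi y : R -> R) (k r : R) :
  0 < k -> 0 < r ->
  mu.-integrable `[0, +oo[ (EFin \o xi) ->
  (forall u, 0 <= u -> 0 <= xi u) ->
  (forall u, 0 <= u -> xi u <= k * expR (- (k * u))) ->
  mu.-integrable `[0, r] (EFin \o y) ->
  (forall u, 0 < u -> 0 <= y u) ->
  \int[mu]_(tau in `[0, r]) (xi (r - tau) * y tau) <=
  k * (expR (- (k * r)) * \int[mu]_(tau in `[0, r]) (expR (k * tau) * y tau)).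
Proof.
move=> k0 r0 L1xi xi0 xib Iy y0.
have /integrableP[/measurable_EFinP mxi _] := L1xi.
have mh : measurable_fun (`[0, r] : set (measurableTypeR R)) (fun tau => xi (r - tau)).
  apply: to_leb.
  have mxi' : measurable_fun (`[0, +oo[ : set R) xi by exact: of_leb mxi.
  rewrite -[X in measurable_fun _ X]/(xi \o (fun tau => r - tau)).
  apply: (measurable_comp _ _ mxi').
  - exact: measurable_itv.
  - move=> _ [tau /= + <-]; rewrite !in_itv /= => /andP[_ tr].
    by rewrite andbT subr_ge0.
  - by apply: measurable_funB => //; exact: measurable_cst.
have bh : [bounded xi (r - tau) | tau in `[0, r]].
  apply: (@bnd_ptw _ _ _ k) => tau; rewrite /= in_itv /= => /andP[t0 tr].
  have h0 : 0 <= r - tau by rewrite subr_ge0.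
  rewrite ger0_norm ?xi0 //; apply: le_trans (xib _ h0) _.
  apply: ler_piMr; first exact: ltW.
  by rewrite expR_le1 oppr_le0 mulr_ge0 // ltW.
have me : measurable_fun (`[0, r] : set (measurableTypeR R)) (fun tau => expR (k * tau)).
  apply: to_leb.
  rewrite -[X in measurable_fun _ X]/(expR \o (fun tau => k * tau)).
  apply: (measurable_comp (F := setT)) => //.
  by apply: measurable_funM => //; exact: measurable_cst.
have be : [bounded expR (k * tau) | tau in `[0, r]].
  apply: (@bnd_ptw _ _ _ (expR (k * r))) => tau; rewrite /= in_itv /= => /andP[t0 tr].
  by rewrite ger0_norm ?expR_ge0 // ler_expR ler_wpM2l // ltW.
have I1 : mu.-integrable `[0, r] (EFin \o (fun tau => xi (r - tau) * y tau)).
  have J := integrableMr (D := `[0, r]) (mu := mu) (measurable_itv _) mh bh Iy.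
  by apply: (eq_integrable _ _ _ _ J).
have I2 : mu.-integrable `[0, r] (EFin \o (fun tau => expR (k * tau) * y tau)).
  apply: (eq_integrable _ _ _ _ (integrableMr (D := `[0, r]) (mu := mu) (measurable_itv _) me be Iy)) => //.
have I3 : mu.-integrable `[0, r]
    (EFin \o (fun tau => k * expR (- (k * r)) * (expR (k * tau) * y tau))).
  by apply: (eq_integrable _ _ _ _ (integrableZl (D := `[0, r]) (mu := mu) (measurable_itv _) (k * expR (- (k * r))) I2)) => //.
rewrite mulrA -RintegralZl //.
have sub : `]0, r] `<=` `[0, r] by apply: subset_itv; rewrite bnd_simp.
rewrite -[leLHS]Rintegral_itv_obnd_cbnd; last exact: integrableS I1.
rewrite -[leRHS]Rintegral_itv_obnd_cbnd; last first.
  exact: integrableS I3.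
apply: le_Rintegral => //.
- exact: integrableS I1.
- exact: integrableS I3.
- move=> tau; rewrite /= in_itv /= => /andP[t0 tr].
  have h0 : 0 <= r - tau by rewrite subr_ge0.
  rewrite mulrA; apply: ler_wpM2r; first exact: y0.
  apply: le_trans (xib _ h0) _.
  rewrite -mulrA -expRD.
  by have -> : - (k * r) + k * tau = - (k * (r - tau)) by ring.
Qed.


Lemma Ie (y : R -> R) (k r : R) : 0 <= k ->
  mu.-integrable `[0, r] (EFin \o y) ->
  mu.-integrable `[0, r] (EFin \o (fun tau => expR (k * tau) * y tau)).
Proof.
move=> k0 Iy.
have me : measurable_fun (`[0, r] : set (measurableTypeR R)) (fun tau => expR (k * tau)).
  apply: to_leb.
  rewrite -[X in measurable_fun _ X]/(expR \o (fun tau => k * tau)).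
  apply: (measurable_comp (F := setT)) => //.
  by apply: measurable_funM => //; exact: measurable_cst.
have be : [bounded expR (k * tau) | tau in `[0, r]].
  apply: (@bnd_ptw _ _ _ (expR (k * r))) => tau; rewrite /= in_itv /= => /andP[t0 tr].
  by rewrite ger0_norm ?expR_ge0 // ler_expR ler_wpM2l.
by apply: (eq_integrable _ _ _ _ (integrableMr (D := `[0, r]) (mu := mu) (measurable_itv _) me be Iy)) => //.
Qed.

Lemma Qalg (ev eu eh h Pu Pv PT Iy : R) :
  0 <= h -> ev = eu * eh -> eh <= 1 - h + h * h -> 0 < eu -> eu <= 1 ->
  0 <= Pu -> Pu <= PT -> ev * (Pv - Pu) <= Iy ->
  ev * Pv - eu * Pu <= Iy - h * (eu * Pu) + (h * h) * PT.
Proof.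
move=> h0 e ehb eu0 eu1 Pu0 PuT H.
have h1 : eu * eh * Pu <= eu * (1 - h + h * h) * Pu.
  rewrite -!mulrA; apply: ler_wpM2l; first exact: ltW.
  by apply: ler_wpM2r.
have h2 : eu * (h * h) * Pu <= (h * h) * PT.
  have : eu * Pu <= PT by apply: le_trans (ler_piMl _ _) PuT.
  move=> H2; have -> : eu * (h * h) * Pu = (h * h) * (eu * Pu) by ring.
  apply: ler_wpM2l => //; exact: mulr_ge0.
have : ev * Pv - eu * Pu = ev * (Pv - Pu) + (eu * eh * Pu - eu * Pu) by rewrite e; ring.
have : eu * (1 - h + h * h) * Pu = eu * Pu - h * (eu * Pu) + eu * (h * h) * Pu by ring.
lra.
Qed.


Lemma Ealg (a C m k dl d xu xv Qu Qv Iy dD dP PT : R) :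
  0 <= d -> 0 <= xu -> 0 <= Qu -> 0 <= dD -> 0 <= dP -> 0 < k -> 0 < m ->
  0 <= a -> m <= a -> m <= k * (1 - dl) -> 0 < dl ->
  xv - xu <= d * (C - a * xu + a * dD + dl * k * (Qu + dP)) - Iy ->
  Qv - Qu <= Iy - (k * d) * Qu + ((k * d) * (k * d)) * PT ->
  (xv + Qv - C / m) - (xu + Qu - C / m) <=
  d * (- m * (xu + Qu - C / m)) + d * ((k * k * PT) * d + (a * dD + k * dP)).
Proof.
move=> d0 xu0 Qu0 dD0 dP0 k0 m0 a0 ma mk dl0 Hx HQ.
have e : - m * (xu + Qu - C / m) = C - m * xu - m * Qu.
  have mm : m * (C / m) = C by rewrite mulrCA divff ?gt_eqF // mulr1.
  have -> : - m * (xu + Qu - C / m) = m * (C / m) - m * xu - m * Qu by ring.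
  by rewrite mm.
rewrite e.
have h1 : d * (m * xu) <= d * (a * xu) by apply: ler_wpM2l => //; apply: ler_wpM2r.
have h2 : d * (m * Qu) <= d * (k * (1 - dl) * Qu) by apply: ler_wpM2l => //; apply: ler_wpM2r.
have h3 : d * (dl * k * dP) <= d * (k * dP).
  apply: ler_wpM2l => //; apply: ler_wpM2r => //.
  have : m <= k - k * dl by rewrite mulrBr mulr1 in mk.
  nra.
have E1 : d * (C - a * xu + a * dD + dl * k * (Qu + dP)) =
  d * C - d * (a * xu) + d * (a * dD) + d * (dl * k * Qu) + d * (dl * k * dP) by ring.
have E2 : d * (k * (1 - dl) * Qu) = k * d * Qu - d * (dl * k * Qu) by ring.
have E3 : d * (C - m * xu - m * Qu) + d * (k * k * PT * d + (a * dD + k * dP)) =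
  d * C - d * (m * xu) - d * (m * Qu) + (k * d * (k * d)) * PT + d * (a * dD) + d * (k * dP) by ring.
lra.
Qed.

Lemma Falg (m d W0 W1 emv emu eT B c1 g1u g1v : R) :
  0 < m -> 0 <= d -> 0 <= c1 * d + (g1v - g1u) -> 0 < emv -> emv <= eT ->
  `|W0| <= B -> emu = emv * expR (- (m * d)) ->
  W1 - W0 <= d * (- m * W0) + d * (c1 * d + (g1v - g1u)) ->
  emv * W1 - emu * W0 <=
  d * ((eT * (m * m * B + c1)) * d + (eT * g1v - eT * g1u)).
Proof.
move=> m0 d0 err0 emv0 emvT WB e H.
have md0 : 0 <= m * d by rewrite mulr_ge0 // ltW.
have lb := expN_lb (m * d).
have ub := expN_ub md0.
set eh := expR (- (m * d)) in e lb ub.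
set err := c1 * d + (g1v - g1u) in err0 H.
have h1 : emv * W1 <= emv * (W0 + d * (- m * W0) + d * err).
  by apply: ler_wpM2l; [exact: ltW | lra].
have q : emv * (1 - eh - m * d) * W0 <= emv * ((m * d) * (m * d)) * B.
  have a1 : `|1 - eh - m * d| <= (m * d) * (m * d).
    by rewrite ler_norml; apply/andP; split; lra.
  have a2 : (1 - eh - m * d) * W0 <= (m * d) * (m * d) * B.
    apply: le_trans (ler_norm _) _; rewrite normrM.
    by apply: ler_pM => //; exact: normr_ge0.
  by have := ler_wpM2l (ltW emv0) a2; rewrite !mulrA.
have q2 : emv * ((m * d) * (m * d)) * B <= eT * ((m * d) * (m * d)) * B.
  apply: ler_wpM2r; first by apply: le_trans (normr_ge0 _) WB.
  by apply: ler_wpM2r => //; rewrite mulr_ge0.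
have q3 : emv * (d * err) <= eT * (d * err).
  by apply: ler_wpM2r => //; rewrite mulr_ge0.
have E1 : emv * (W0 + d * (- m * W0) + d * err) - emu * W0 =
  emv * (1 - eh - m * d) * W0 + emv * (d * err) by rewrite e; ring.
have E2 : d * (eT * (m * m * B + c1) * d + (eT * g1v - eT * g1u)) =
  eT * ((m * d) * (m * d)) * B + eT * (d * err) by rewrite /err; ring.
lra.
Qed.


Lemma intZ (D : set (measurableTypeR R)) (c : R) (f : R -> R) : measurable D ->
  mu.-integrable D (EFin \o f) -> mu.-integrable D (EFin \o (fun x => c * f x)).
Proof.
move=> mD If.
by apply: (eq_integrable _ _ _ _ (integrableZl (mu := mu) mD c If)).
Qed.

Lemma intcB (u v K : R) (f : R -> R) :
  mu.-integrable `]u, v] (EFin \o f) ->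
  mu.-integrable `]u, v] (EFin \o (fun x => K - f x)).
Proof.
move=> If.
have := integrableB (mu := mu) (measurable_itv `]u, v]) (int_cst_oc K u v) If.
by apply: eq_integrable => //.
Qed.

End prim.

Unset Implicit Arguments. Set Strict Implicit.

Theorem lemma4p8 (R : realType) (xi dxi x dx y : R -> R) (a C delta : R) :
  W11 xi dxi ->
  (forall t, 0 <= t -> 0 <= xi t) ->
  {ae leb, forall t, 0 < t -> dxi t <= - (xi 0 * xi t)} ->
  W11loc x dx ->
  L1loc y ->
  (forall t, 0 <= t -> 0 <= x t) ->
  (forall t, 0 < t -> 0 <= y t) ->
  0 < a -> 0 < C -> 0 < delta < 1 ->
  {ae leb, forall t, 0 < t ->
     dx t + a * x t + y t <= C + delta * kconv0 xi y t} ->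
  0 < Num.min a (xi 0 * (1 - delta)) ->
  forall t, 0 < t ->
    x t <= Num.max (x 0) (C / Num.min a (xi 0 * (1 - delta))).
Proof.
move=> [L1xi [L1dxi Hxi]] xip aexi [L1dx Hx] L1y xp yp a0 C0 /andP[dl0 dl1] aex mu0 T T0.
set m := Num.min a (xi 0 * (1 - delta)) in mu0 *.
have k0 : 0 < xi 0.
  move: mu0; rewrite /m lt_min => /andP[_ h].
  by move: h; rewrite pmulr_lgt0 // subr_gt0.
have ma : m <= a by rewrite /m ge_min lexx.
have mk : m <= xi 0 * (1 - delta) by rewrite /m ge_min lexx orbT.
case: aexi => N1 [mN1 N10 sN1].
have Hd1 : forall r, 0 < r -> ~ N1 r -> dxi r <= - (xi 0 * xi r).
  move=> r r0 Nr; apply: contrapT => nH; apply: Nr; apply: sN1 => /=.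
  by move/(_ r0).
case: aex => N2 [mN2 N20 sN2].
have Hd2 : forall r, 0 < r -> ~ N2 r ->
    dx r + a * x r + y r <= C + delta * kconv0 xi y r.
  move=> r r0 Nr; apply: contrapT => nH; apply: Nr; apply: sN2 => /=.
  by move/(_ r0).
have Idxi : forall S, 0 <= S -> leb.-integrable `[0, S] (EFin \o dxi).
  move=> S S0; apply: integrableS L1dxi => //.
  by apply: subset_itv; rewrite bnd_simp.
have xib : forall u, 0 <= u -> xi u <= xi 0 * expR (- (xi 0 * u)).
  by move=> u u0; exact: (xi_bound (Idxi u u0) Hxi xip mN1 N10 Hd1 k0 u0).
have Idx := L1dx T T0.
have Iy := L1y T T0.
have IeT := Ie (ltW k0) Iy.
pose P s := \int[leb]_(tau in `[0, s]) (expR (xi 0 * tau) * y tau).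
pose Q s := expR (- (xi 0 * s)) * P s.
pose Dd s := \int[leb]_(z in `[0, s]) `|dx z|.
have P0 : P 0 = 0 by rewrite /P set_itv1 Rintegral_set1.
have Dd0 : Dd 0 = 0 by rewrite /Dd set_itv1 Rintegral_set1.
have Pinc : forall u v, 0 <= u -> u <= v -> v <= T ->
    P v - P u = \int[leb]_(tau in `]u, v]) (expR (xi 0 * tau) * y tau).
  by move=> u v u0 uv vT; exact: (Rint_split IeT u0 uv vT).
have Pmono : forall u v, 0 <= u -> u <= v -> v <= T -> 0 <= P v - P u.
  move=> u v u0 uv vT; rewrite Pinc //.
  apply: Rintegral_ge0 => tau; rewrite /= in_itv /= => /andP[ut _].
  by apply: mulr_ge0; [exact: expR_ge0 | apply: yp; exact: le_lt_trans ut].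
have Pge0 : forall u, 0 <= u -> u <= T -> 0 <= P u.
  by move=> u u0 uT; have := Pmono 0 u (lexx 0) u0 uT; rewrite P0 subr0.
have eu1 : forall u, 0 <= u -> expR (- (xi 0 * u)) <= 1.
  by move=> u u0; rewrite expR_le1 oppr_le0 mulr_ge0 // ltW.
have Qge0 : forall u, 0 <= u -> u <= T -> 0 <= Q u.
  by move=> u u0 uT; apply: mulr_ge0; [exact: expR_ge0 | exact: Pge0].
have Qup : forall u r v, 0 <= u -> u <= r -> r <= v -> v <= T ->
    Q r <= Q u + (P v - P u).
  move=> u r v u0 ur rv vT.
  have r0 : 0 <= r := le_trans u0 ur.
  have rT : r <= T := le_trans rv vT.
  have h1 : expR (- (xi 0 * r)) * P r <= expR (- (xi 0 * u)) * P r.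
    apply: ler_wpM2r; first exact: Pge0.
    by rewrite ler_expR lerN2 ler_wpM2l // ltW.
  have h2 : expR (- (xi 0 * u)) * (P r - P u) <= P r - P u.
    by apply: ler_piMl; [exact: Pmono | exact: eu1].
  have h3 := Pmono r v r0 rv vT.
  rewrite /Q.
  have e : expR (- (xi 0 * u)) * P r =
    expR (- (xi 0 * u)) * P u + expR (- (xi 0 * u)) * (P r - P u) by ring.
  lra.
have Yb : forall r, 0 < r -> r <= T -> kconv0 xi y r <= xi 0 * Q r.
  move=> r r0 rT.
  exact: (Ybound k0 r0 L1xi xip xib (int_sub_cc Iy rT) yp).
have Qstep : forall u v, 0 <= u -> u <= v -> v <= T ->
    Q v - Q u <= \int[leb]_(z in `]u, v]) y z - (xi 0 * (v - u)) * Q u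
                 + ((xi 0 * (v - u)) * (xi 0 * (v - u))) * P T.
  move=> u v u0 uv vT.
  have v0 : 0 <= v := le_trans u0 uv.
  have h0 : 0 <= xi 0 * (v - u) by rewrite mulr_ge0 // ?subr_ge0 // ltW.
  rewrite /Q.
  apply: (Qalg (eh := expR (- (xi 0 * (v - u))))).
  - exact: h0.
  - by rewrite -expRD; congr expR; ring.
  - exact: expN_ub.
  - exact: expR_gt0.
  - exact: eu1.
  - exact: Pge0 (le_trans uv vT).
  - have := Pmono u T u0 (le_trans uv vT) (lexx T); lra.
  - rewrite Pinc // -RintegralZl //; last exact: int_sub IeT u0 vT.
    apply: le_Rintegral => //.
    + apply: intZ => //; exact: int_sub IeT u0 vT.
    + exact: int_sub Iy u0 vT.
    + move=> tau; rewrite /= in_itv /= => /andP[ut tv].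
      have y0 : 0 <= y tau by apply: yp; exact: le_lt_trans ut.
      rewrite mulrA; apply: ler_piMl => //.
      rewrite -expRD expR_le1.
      have := ler_wpM2l (ltW k0) tv; lra.
have xstep : forall u v, 0 <= u -> u <= v -> v <= T ->
    x v - x u <= (v - u) * (C - a * x u + a * (Dd v - Dd u)
      + delta * xi 0 * (Q u + (P v - P u))) - \int[leb]_(z in `]u, v]) y z.
  move=> u v u0 uv vT.
  set K0 := C - a * x u + a * (Dd v - Dd u) + delta * xi 0 * (Q u + (P v - P u)).
  rewrite (prim_inc Idx Hx u0 uv vT).
  have Iyuv := int_sub Iy u0 vT.
  have H : \int[leb]_(z in `]u, v]) dx z <= \int[leb]_(z in `]u, v]) (K0 - y z).
    apply: (ae_le_Rint _ mN2 N20).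
    - exact: measurable_itv.
    - exact: int_sub Idx u0 vT.
    - exact: intcB.
    - move=> r /= ruv Nr.
      rewrite in_itv /= in ruv; case/andP: ruv => ur rv.
      have r0 : 0 < r by apply: le_lt_trans ur.
      have rT : r <= T := le_trans rv vT.
      have h1 := Hd2 r r0 Nr.
      have h2 := Yb r r0 rT.
      have h3 := Qup u r v u0 (ltW ur) rv vT.
      have h4 := prim_var Idx Hx u0 (ltW ur) rv vT.
      move/ler_normlP: h4 => [h4 _].
      rewrite -/(Dd v) -/(Dd u) in h4.
      have p1 : delta * kconv0 xi y r <= delta * (xi 0 * (Q u + (P v - P u))).
        apply: ler_wpM2l; first exact: ltW.
        apply: le_trans h2 _; apply: ler_wpM2l => //; exact: ltW.
      have p2 : a * (x u - (Dd v - Dd u)) <= a * x r.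
        apply: ler_wpM2l; first exact: ltW.
        lra.
      have e1 : delta * xi 0 * (Q u + (P v - P u)) = delta * (xi 0 * (Q u + (P v - P u))) by ring.
      have e2 : a * (x u - (Dd v - Dd u)) = a * x u - a * (Dd v - Dd u) by ring.
      rewrite /K0; lra.
  have e2 : \int[leb]_(z in `]u, v]) (K0 - y z) =
      \int[leb]_(z in `]u, v]) K0 - \int[leb]_(z in `]u, v]) y z.
    by apply: RintegralB => //; exact: int_cst_oc.
  rewrite e2 Rint_cst_oc // in H.
  have e3 : (v - u) * K0 = K0 * (v - u) by ring.
  lra.
have m0 : 0 < m := mu0.
pose c1 := xi 0 * xi 0 * P T.
pose g1 s := a * Dd s + xi 0 * P s.
pose W s := x s + Q s - C / m.
have PT0 : 0 <= P T := Pge0 T (ltW T0) (lexx T).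
have Wstep : forall u v, 0 <= u -> u <= v -> v <= T ->
    W v - W u <= (v - u) * (- m * W u) + (v - u) * (c1 * (v - u) + (g1 v - g1 u)).
  move=> u v u0 uv vT.
  have uT : u <= T := le_trans uv vT.
  have := Ealg (a := a) (C := C) (m := m) (k := xi 0) (dl := delta) (d := v - u)
    (xu := x u) (xv := x v) (Qu := Q u) (Qv := Q v)
    (Iy := \int[leb]_(z in `]u, v]) y z) (dD := Dd v - Dd u) (dP := P v - P u)
    (PT := P T).
  move=> /(_ _ (xp u u0) (Qge0 u u0 uT) (Gmono Idx u0 uv vT) (Pmono u v u0 uv vT) k0 m0
    (ltW a0) ma mk dl0 (xstep u v u0 uv vT) (Qstep u v u0 uv vT)).
  have d0 : 0 <= v - u by rewrite subr_ge0.
  move=> /(_ d0) H.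
  rewrite /W /g1 /c1.
  have e : a * Dd v + xi 0 * P v - (a * Dd u + xi 0 * P u) = a * (Dd v - Dd u) + xi 0 * (P v - P u) by ring.
  rewrite e.
  have e' : xi 0 * xi 0 * P T * (v - u) = (xi 0 * xi 0 * P T) * (v - u) by ring.
  exact: H.
pose B := x 0 + Dd T + P T + C / m.
have Cm0 : 0 <= C / m by rewrite divr_ge0 // ltW.
have Wb : forall u, 0 <= u -> u <= T -> `|W u| <= B.
  move=> u u0 uT.
  have h1 := prim_var Idx Hx (lexx 0) u0 uT (lexx T).
  move/ler_normlP: h1 => [_ h1].
  rewrite -/(Dd T) -/(Dd 0) Dd0 subr0 in h1.
  have h2 : Q u <= P T.
    have : Q u <= P u by rewrite /Q; apply: ler_piMl; [exact: Pge0 | exact: eu1].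
    have := Pmono u T u0 uT (lexx T); lra.
  have h3 := Gmono Idx (lexx 0) (ltW T0) (lexx T).
  rewrite -/(Dd T) -/(Dd 0) Dd0 subr0 in h3.
  have h4 := xp u u0. have h5 := Qge0 u u0 uT. have h6 := xp 0 (lexx 0).
  rewrite ler_norml /W /B; apply/andP; split; lra.
have := PL (f := fun s => expR (m * s) * W s) (g := fun s => expR (m * T) * g1 s)
  (c := expR (m * T) * (m * m * B + c1)) (ltW T0).
have hyp : forall u v, 0 <= u -> u <= v -> v <= T ->
    expR (m * v) * W v - expR (m * u) * W u <=
    (v - u) * (expR (m * T) * (m * m * B + c1) * (v - u) +
               (expR (m * T) * g1 v - expR (m * T) * g1 u)).
  move=> u v u0 uv vT.
  have uT : u <= T := le_trans uv vT.
  apply: Falg.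
  - exact: m0.
  - by rewrite subr_ge0.
  - rewrite /c1 /g1.
    have := Gmono Idx u0 uv vT; have := Pmono u v u0 uv vT.
    rewrite -/(Dd v) -/(Dd u) => h1 h2.
    have p1 : 0 <= xi 0 * xi 0 * P T * (v - u) by rewrite !mulr_ge0 // ?subr_ge0 // ltW.
    have p2 : 0 <= a * (Dd v - Dd u) by rewrite mulr_ge0 // ltW.
    have p3 : 0 <= xi 0 * (P v - P u) by rewrite mulr_ge0 // ltW.
    have e : a * Dd v + xi 0 * P v - (a * Dd u + xi 0 * P u) = a * (Dd v - Dd u) + xi 0 * (P v - P u) by ring.
    lra.
  - exact: expR_gt0.
  - by rewrite ler_expR ler_wpM2l // ltW.
  - exact: Wb.
  - by rewrite -expRD; congr expR; ring.
  - exact: Wstep.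
move=> /(_ hyp).
rewrite mulr0 expR0 mul1r.
have W0 : W 0 = x 0 - C / m by rewrite /W /Q P0 mulr0 addr0.
rewrite W0 => HW.
rewrite le_max.
have hQ := Qge0 T (ltW T0) (lexx T).
have [hW|hW] := leP (W T) 0.
  by apply/orP; right; move: hW; rewrite /W; lra.
apply/orP; left.
have e1 := expR_ge1Dx (m * T).
have p : (1 + m * T) * W T <= expR (m * T) * W T by apply: ler_wpM2r => //; exact: ltW.
have p2 : 0 <= m * T * W T by rewrite !mulr_ge0 // ltW.
have e2 : (1 + m * T) * W T = W T + m * T * W T by ring.
have q : W T <= x 0 - C / m by lra.
by move: q; rewrite /W; lra.
Qed.
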